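(* Let $p\geq 3$ be a prime, $u\in\{1,\ldots,p-1\}$ and $s\geq 2$ an integer. For an integer $n\geq p^{s+1}$ with base-$p$ expansion $n=\sum_{i=0}^{v}\varepsilon_i p^{i}$ ($\varepsilon_i\in\{0,\ldots,p-1\}$), let $t(n)>s$ be the least index $t>s$ with $\varepsilon_t\neq 0$. Then among those $n\geq p^{s+1}$ with $\nu_{p}\big(A_{p,(p-1)(up^s-1)}(n)\big)\in\{1,2\}$, the value $\nu_{p}\big(A_{p,(p-1)(up^s-1)}(n)\big)$ depends only on the digit $\varepsilon_s$ and the digit $\varepsilon_{t(n)}$; that is, if $n,n'\geq p^{s+1}$ both have valuation in $\{1,2\}$, the same digit in position $s$, and the same first nonzero digit in a position greater than $s$, then $\nu_{p}\big(A_{p,(p-1)(up^s-1)}(n)\big)=\nu_{p}\big(A_{p,(p-1)(up^s-1)}(n')\big)$.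
   Context: For an integer $m\geq 2$ and a positive integer $k$, the integers $A_{m,k}(n)$, $n\in\mathbb{N}=\{0,1,2,\ldots\}$, are defined by the formal power series identity $\prod_{i=0}^{\infty}\big(1-x^{m^{i}}\big)^{-k}=\sum_{n=0}^{\infty}A_{m,k}(n)x^{n}$. For a prime $p$, $\nu_p(n)$ denotes the $p$-adic valuation of the integer $n$, with $\nu_p(0)=+\infty$. *)

(* Defs.v *)
From mathcomp Require Import all_boot all_order all_algebra.
Set Implicit Arguments. Unset Strict Implicit. Unset Printing Implicit Defensive.
Import GRing.Theory.
Local Open Scope ring_scope.

(* Truncation of the formal power series (1 - y)^{-k} = \sum_j C(j+k-1, k-1) y^j
   with y = x^(m^i), keeping the terms j <= n. *)
Definition geom_trunc (m k n i : nat) : {poly int} :=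
  \sum_(j < n.+1) ('C(j + k - 1, k - 1))%:R *: 'X^(j * m ^ i).

(* A_{m,k}(n) = coefficient of x^n in \prod_{i>=0} (1 - x^{m^i})^{-k}.
   Factors with i > n (m^i > n since m >= 2) and terms of degree > n do not
   affect the coefficient of x^n, so the finite truncation computes it exactly. *)
Definition A (m k n : nat) : int :=
  (\prod_(i < n.+1) geom_trunc m k n i)`_n.

(* p-adic valuation of an integer (logn p 0 = 0) *)
Definition nu (p : nat) (a : int) : nat := logn p `|a|%N.

Definition digit (p i n : nat) : nat := (n %/ p ^ i %% p)%N.

Definition is_tn (p s n t : nat) : Prop :=
  [/\ (s < t)%N, digit p t n != 0%N & forall j, (s < j < t)%N -> digit p j n = 0%N].

(* Main.v *)
Require Import Defs.
From mathcomp Require Import all_boot all_order all_algebra.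
From mathcomp Require Import ring zify.

Module Aux.
Local Set Implicit Arguments. Local Unset Strict Implicit. Local Unset Printing Implicit Defensive.
Import GRing.Theory.
Local Open Scope ring_scope.


Definition em (q : int) (N : nat) (h : {poly int}) :=
  forall i, (i <= N)%N -> (q %| h`_i)%Z.

Section EM.
Variables (q : int) (N : nat).

Lemma em0 : em q N 0.
Proof. by move=> i _; rewrite coef0 dvdz0. Qed.

Lemma emD f g : em q N f -> em q N g -> em q N (f + g).
Proof. by move=> hf hg i hi; rewrite coefD rpredD ?hf ?hg. Qed.

Lemma emN f : em q N f -> em q N (- f).
Proof. by move=> hf i hi; rewrite coefN rpredN hf. Qed.

Lemma emB f g : em q N f -> em q N g -> em q N (f - g).
Proof. by move=> hf hg; apply: emD => //; apply: emN. Qed.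

Lemma em_sum (I : finType) (P : pred I) (F : I -> {poly int}) :
  (forall i, P i -> em q N (F i)) -> em q N (\sum_(i | P i) F i).
Proof.
move=> h; elim/big_ind: _ => //; [exact: em0 | exact: emD].
Qed.

Lemma emMM (a b : int) f g : em a N f -> em b N g -> em (a * b) N (f * g).
Proof.
move=> hf hg i hi; rewrite coefM; apply: rpred_sum => j _.
apply: dvdz_mul; first by apply: hf; apply: leq_trans hi; rewrite -ltnS.
by apply: hg; apply: leq_trans hi; apply: leq_subr.
Qed.

Lemma em1 f : em 1 N f.
Proof. by move=> i _; rewrite dvd1z. Qed.

Lemma emMl f g : em q N f -> em q N (f * g).
Proof. by move=> hf; rewrite -[q]mulr1; apply: emMM => //; apply: em1. Qed.

Lemma emMr f g : em q N g -> em q N (f * g).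
Proof. by move=> hg; rewrite mulrC; apply: emMl. Qed.

Lemma em_dvd (a : int) f : (q %| a)%Z -> em a N f -> em q N f.
Proof. by move=> ha hf i hi; apply: dvdz_trans ha (hf i hi). Qed.

Lemma em_le N' f : (N' <= N)%N -> em q N f -> em q N' f.
Proof. by move=> hN hf i hi; apply: hf; apply: leq_trans hN. Qed.

Lemma emMn f n : (q %| n%:Z)%Z -> em q N (f *+ n).
Proof. by move=> hn i hi; rewrite coefMn -mulr_natr; apply: dvdz_mull; rewrite natz. Qed.

Lemma em_comp f d : (0 < d)%N -> em q N f -> em q N (f \Po 'X^d).
Proof.
move=> hd hf i hi; rewrite coef_comp_poly_Xn //; case: ifP => _; last exact: dvdz0.
by apply: hf; apply: leq_trans hi; apply: leq_div.
Qed.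

Lemma emM2 f f' g g' : em q N (f - f') -> em q N (g - g') -> em q N (f * g - f' * g').
Proof.
move=> h1 h2; have -> : f * g - f' * g' = (f - f') * g + f' * (g - g') by ring.
by apply: emD; [apply: emMl | apply: emMr].
Qed.

Lemma emX f g n : em q N (f - g) -> em q N (f ^+ n - g ^+ n).
Proof. by move=> h; rewrite subrXX; apply: emMl. Qed.

Lemma em_trans f g h : em q N (f - g) -> em q N (g - h) -> em q N (f - h).
Proof. move=> h1 h2; have -> : f - h = (f - g) + (g - h) by ring.
by apply: emD. Qed.

Lemma em_sym f g : em q N (f - g) -> em q N (g - f).
Proof. move=> h; have -> : g - f = - (f - g) by ring.
by apply: emN. Qed.

Lemma em_refl f : em q N (f - f).
Proof. by rewrite subrr; apply: em0. Qed.

End EM.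

Lemma em_of0 q N f : em 0 N f -> em q N f.
Proof. by apply: em_dvd; rewrite dvdz0. Qed.


Lemma frob (p : nat) N (a b : {poly int}) : prime p ->
  em p%:Z N ((a + b) ^+ p - a ^+ p - b ^+ p).
Proof.
move=> pp; have p0 : (0 < p)%N by apply: prime_gt0.
rewrite exprDn; case: p pp p0 => [//|p'] pp _.
rewrite big_ord_recr big_ord_recl /= !subnn subn0 !expr0 mulr1 mul1r bin0 binn !mulr1n.
have -> : forall x y z : {poly int}, x + z + y - x - y = z by move=> x y z; ring.
apply: em_sum => i _; apply: emMn; rewrite dvdzE /=.
apply: prime_dvd_bin => //=; rewrite ltnS; exact: ltn_ord.
Qed.

Lemma frob2 (p : nat) N (f g : {poly int}) : prime p ->
  em p%:Z N (f - g) -> em (p%:Z * p%:Z) N (f ^+ p - g ^+ p).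
Proof.
move=> pp h; rewrite subrXX; apply: emMM => //.
have -> : \sum_(i < p) f ^+ (p.-1 - i) * g ^+ i =
   \sum_(i < p) (f ^+ (p.-1 - i) - g ^+ (p.-1 - i)) * g ^+ i + (g ^+ p.-1) *+ p.
  rewrite -[in X in _ = _ + X](card_ord p) -sumr_const.
  rewrite -big_split /=; apply: eq_bigr => i _.
  rewrite mulrBl -exprD subnK; last by rewrite -ltnS prednK ?prime_gt0 //.
  by rewrite card_ord subrK.
apply: emD; first by apply: em_sum => i _; apply: emMl; apply: emX.
by apply: emMn; apply: dvdzz.
Qed.

Lemma binom2 (p : nat) N (a h : {poly int}) m :
  em p%:Z N h -> em (p%:Z * p%:Z) N ((a + h) ^+ m.+1 - a ^+ m.+1 - h * a ^+ m *+ m.+1).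
Proof.
move=> hh; elim: m => [|m IH].
  rewrite !expr1 expr0 mulr1 mulr1n; have -> : a + h - a - h = 0 by ring.
  exact: em0.
have -> : (a + h) ^+ m.+2 - a ^+ m.+2 - h * a ^+ m.+1 *+ m.+2 =
  (a + h) * ((a + h) ^+ m.+1 - a ^+ m.+1 - h * a ^+ m *+ m.+1) + (h * h) * a ^+ m *+ m.+1.
  rewrite -(mulr_natr (h * a ^+ m.+1)) -(mulr_natr (h * a ^+ m)) -(mulr_natr (h * h * a ^+ m)).
  rewrite (exprS (a + h) m.+1) (exprS a m.+1) (exprS a m).
  rewrite [(m.+2)%:R]mulrS.
  set c := (m.+1)%:R; set B := (a + h) ^+ m.+1; set A := a ^+ m; ring.
apply: emD; first by apply: emMr.
rewrite -(mulr_natr (h * h * a ^+ m)) -mulrA; apply: emMl; exact: emMM.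
Qed.

Lemma cancel1X q N h : em q N ((1 - 'X) * h) -> em q N h.
Proof.
move=> H; elim=> [|i IH] hi.
  by have := H 0%N hi; rewrite mulrBl mul1r coefB coefXM /= subr0.
have := H i.+1 hi; rewrite mulrBl mul1r coefB coefXM /=.
move=> H2; have -> : h`_i.+1 = (h`_i.+1 - h`_i) + h`_i by ring.
by apply: rpredD => //; apply: IH; apply: ltnW.
Qed.


Lemma comp_exp (f r : {poly int}) n : (f ^+ n) \Po r = (f \Po r) ^+ n.
Proof.
elim: n => [|n IH]; first by rewrite !expr0 -polyC1 comp_polyC.
by rewrite !exprS comp_polyM IH.
Qed.

Lemma comp_1X d : (1 - 'X) \Po 'X^d = 1 - 'X^d :> {poly int}.
Proof. by rewrite comp_polyB -polyC1 comp_polyC comp_polyX. Qed.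

Lemma comp_prod (I : finType) (F : I -> {poly int}) r :
  (\prod_i F i) \Po r = \prod_i (F i \Po r).
Proof.
elim/big_rec2: _ => [|i x y _ <-]; first by rewrite -polyC1 comp_polyC.
by rewrite comp_polyM.
Qed.

Lemma em_prod1 q N (I : finType) (F : I -> {poly int}) :
  (forall i, em q N (F i - 1)) -> em q N (\prod_i F i - 1).
Proof.
move=> h; elim/big_rec: _ => [|i x _ IH]; first by rewrite subrr; apply: em0.
have -> : F i * x - 1 = (F i - 1) * x + (x - 1) by ring.
by apply: emD; [apply: emMl|].
Qed.

Definition Sk (k N : nat) : {poly int} := \poly_(j < N.+1) ('C(j + k - 1, k - 1))%:R.

Lemma geom_Sk m k N i : geom_trunc m k N i = Sk k N \Po 'X^(m ^ i).
Proof.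
rewrite /geom_trunc /Sk poly_def.
rewrite (big_morph (fun f => f \Po 'X^(m ^ i)) (fun f g => comp_polyD f g 'X^(m ^ i))
   (comp_poly0 _)).
apply: eq_bigr => j _; rewrite comp_polyZ comp_Xn_poly -exprM mulnC //.
Qed.

Lemma Sk1 N : em 0 N (Sk 1 N * (1 - 'X) - 1).
Proof.
move=> i hi; rewrite mulrBr mulr1 coefB coefB coefMX coef1 /Sk !coef_poly.
rewrite ltnS hi; case: i hi => [|i] hi /=; first by rewrite bin0 subr0 subrr dvdz0.
rewrite ltnW // !bin0 subr0 subrr dvdz0 //.
Qed.

Lemma SkS k N : (0 < k)%N -> em 0 N (Sk k.+1 N * (1 - 'X) - Sk k N).
Proof.
case: k => [//|k] _ i hi; rewrite mulrBr mulr1 coefB coefB coefMX /Sk !coef_poly.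
rewrite ltnS hi; case: i hi => [|i] hi /=.
  by rewrite subr0 !add0n !subSS subn0 !binn subrr dvdz0.
rewrite ltnW //.
have -> : (i.+1 + k.+2 - 1 = (i + k.+1).+1)%N by lia.
have -> : (k.+2 - 1 = k.+1)%N by lia.
have -> : (i + k.+2 - 1 = i + k.+1)%N by lia.
have -> : (i.+1 + k.+1 - 1 = i + k.+1)%N by lia.
have -> : (k.+1 - 1 = k)%N by lia.
rewrite binS natrD; have -> : forall a b : int, a + b - a - b = 0 by move=> a b; ring.
exact: dvdz0.
Qed.

Lemma Sk_inv k N : (0 < k)%N -> em 0 N (Sk k N * (1 - 'X) ^+ k - 1).
Proof.
elim: k => [//|k IH] _; case: (posnP k) => [->|kp].
  by rewrite expr1; apply: Sk1.
have -> : Sk k.+1 N * (1 - 'X) ^+ k.+1 - 1 =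
  (Sk k.+1 N * (1 - 'X) - Sk k N) * (1 - 'X) ^+ k + (Sk k N * (1 - 'X) ^+ k - 1).
  rewrite exprS; ring.
by apply: emD; [apply: emMl; apply: SkS | apply: IH].
Qed.

Definition Qp (p K : nat) : {poly int} := \prod_(i < K) (1 - 'X^(p ^ i)) ^+ (p - 1).

Lemma P_inv p k N : (0 < p)%N -> (0 < k)%N ->
  em 0 N ((\prod_(i < N.+1) geom_trunc p k N i) * (\prod_(i < N.+1) (1 - 'X^(p ^ i)) ^+ k) - 1).
Proof.
move=> p0 k0; rewrite -big_split /=; apply: em_prod1 => i.
rewrite geom_Sk -comp_1X -comp_exp -comp_polyM.
have -> : forall f : {poly int}, f \Po 'X^(p ^ i) - 1 = (f - 1) \Po 'X^(p ^ i).
  by move=> f; rewrite comp_polyB -polyC1 comp_polyC.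
by apply: em_comp; [rewrite expn_gt0 p0 | apply: Sk_inv].
Qed.

Lemma oddp_neg (p : nat) (Y : {poly int}) : odd p -> (- Y) ^+ p = - Y ^+ p.
Proof. by move=> op; rewrite exprNn -signr_odd op expr1 mulN1r. Qed.

Lemma Q_tele p N K : prime p -> odd p ->
  em p%:Z N ((1 - 'X) * Qp p K - (1 - 'X^(p ^ K))).
Proof.
move=> pp op; elim: K => [|K IH].
  by rewrite /Qp big_ord0 mulr1 expn0 expr1 subrr; apply: em0.
rewrite /Qp big_ord_recr /= -/(Qp p K).
set Ph := 1 - 'X^(p ^ K).
have hp : p = (p - 1).+1 by rewrite subn1 prednK // prime_gt0.
have -> : (1 - 'X) * (Qp p K * Ph ^+ (p - 1)) - (1 - 'X^(p ^ K.+1)) =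
   ((1 - 'X) * Qp p K - Ph) * Ph ^+ (p - 1) + (Ph * Ph ^+ (p - 1) - (1 - 'X^(p ^ K.+1))).
  ring.
apply: emD; first by apply: emMl.
rewrite -exprS -hp.
have -> : 1 - 'X^(p ^ K.+1) = 1 ^+ p + (- 'X^(p ^ K)) ^+ p :> {poly int}.
  by rewrite expr1n oddp_neg // -exprM expnSr.
have -> : Ph ^+ p - (1 ^+ p + (- 'X^(p ^ K)) ^+ p) = (1 + - 'X^(p ^ K)) ^+ p - 1 ^+ p - (- 'X^(p ^ K)) ^+ p.
  by rewrite /Ph; ring.
exact: frob.
Qed.


Lemma em_Xbig q N d : (N < d)%N -> em q N (- 'X^d).
Proof.
move=> hd i hi; rewrite coefN coefXn.
have -> : (i == d) = false by apply/negbTE; rewrite neq_ltn (leq_ltn_trans hi hd).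
by rewrite oppr0 dvdz0.
Qed.

Lemma A_T p u s n : prime p -> odd p -> (0 < u)%N -> (0 < s)%N ->
  em (p%:Z * p%:Z) n ((\prod_(i < n.+1) geom_trunc p ((p - 1) * (u * p ^ s - 1)) n i)
     - (1 - 'X) ^+ (u * p ^ s) * Qp p n.+1).
Proof.
move=> pp op u0 s0.
have p0 : (0 < p)%N by apply: prime_gt0.
have p2 : (1 < p)%N by apply: prime_gt1.
set k := ((p - 1) * (u * p ^ s - 1))%N.
set m := (u * p ^ s)%N.
have m0 : (0 < m)%N by rewrite /m muln_gt0 u0 expn_gt0 p0.
have k0 : (0 < k)%N.
  rewrite /k muln_gt0 subn_gt0 p2 subn_gt0 /=.
  by apply: (leq_trans _ (leq_pmull _ u0)); rewrite -(expn0 p) ltn_exp2l.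
set P := \prod_(i < n.+1) geom_trunc p k n i.
pose D : {poly int} := \prod_(i < n.+1) (1 - 'X^(p ^ i)) ^+ k.
set Q := Qp p n.+1.
set T := (1 - 'X) ^+ m * Q.
have hD : D = Q ^+ (m - 1).
  by rewrite /D /Q /Qp -prodrXl; apply: eq_bigr => i _; rewrite -exprM.
have hTD : T * D = ((1 - 'X) * Q) ^+ m.
  by rewrite /T hD exprMn -mulrA -exprS subn1 prednK.
have h1 : em p%:Z n ((1 - 'X) * Q - 1).
  have -> : (1 - 'X) * Q - 1 = ((1 - 'X) * Q - (1 - 'X^(p ^ n.+1))) + (- 'X^(p ^ n.+1)) by ring.
  apply: emD; first exact: Q_tele.
  by apply: em_Xbig; apply: (ltn_trans (ltn_expl n p2)); rewrite ltn_exp2l.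
have h2 : em (p%:Z * p%:Z) n (T * D - 1).
  rewrite hTD.
  have -> : m = (p * (u * p ^ s.-1))%N.
    by rewrite /m mulnCA -expnS prednK.
  rewrite exprM -[X in _ - X](expr1n _ (u * p ^ s.-1)).
  apply: emX; rewrite -[X in _ - X](expr1n _ p); exact: frob2.
have hPD := @P_inv p k n p0 k0; rewrite -/P -/D in hPD.
have -> : P - T = P * (1 - T * D) + T * (P * D - 1) by ring.
apply: emD; first by apply: emMr; rewrite -opprB; apply: emN.
by apply: emMr; apply: em_of0.
Qed.


Lemma frob1X p N d : prime p -> odd p ->
  em p%:Z N ((1 - 'X^d) ^+ p - (1 - 'X^(d * p))).
Proof.
move=> pp op.
have -> : 1 - 'X^(d * p) = 1 ^+ p + (- 'X^d) ^+ p :> {poly int}.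
  by rewrite expr1n oddp_neg // -exprM.
have -> : (1 - 'X^d) ^+ p - (1 ^+ p + (- 'X^d) ^+ p) = (1 + - 'X^d) ^+ p - 1 ^+ p - (- 'X^d) ^+ p :> {poly int}.
  by ring.
exact: frob.
Qed.

Lemma pow_ps p N s : prime p -> odd p ->
  em (p%:Z * p%:Z) N ((1 - 'X) ^+ (p ^ s.+1) - (1 - 'X^(p ^ s)) ^+ p).
Proof.
move=> pp op; elim: s => [|s IH]; first by rewrite expn1 expn0 expr1 subrr; apply: em0.
rewrite expnSr exprM.
apply: (em_trans (g := ((1 - 'X^(p ^ s)) ^+ p) ^+ p)); first exact: emX.
apply: frob2 => //; rewrite expnSr; exact: frob1X.
Qed.

Lemma Qp_split p a K : Qp p (a + K) = Qp p a * (Qp p K \Po 'X^(p ^ a)).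
Proof.
rewrite /Qp big_split_ord /= comp_prod; congr (_ * _); apply: eq_bigr => i _.
by rewrite comp_exp comp_polyB -polyC1 comp_polyC comp_Xn_poly -exprM expnD.
Qed.

Definition Yp (p : nat) : {poly int} := (1 - 'X) ^+ (p - 1) - \sum_(j < p) 'X^j.

Lemma geom_id (p : nat) : (1 - 'X) * \sum_(j < p) 'X^j = 1 - 'X^p :> {poly int}.
Proof.
have := subrXX (1 : {poly int}) 'X p; rewrite expr1n => ->.
by congr (_ * _); apply: eq_bigr => i _; rewrite expr1n mul1r.
Qed.

Lemma Yp_id p : (0 < p)%N -> (1 - 'X) ^+ p - (1 - 'X^p) = (1 - 'X) * Yp p :> {poly int}.
Proof.
move=> p0; rewrite /Yp mulrBr geom_id -exprS subn1 prednK //.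
Qed.

Lemma Yp_em p N : prime p -> odd p -> em p%:Z N (Yp p).
Proof.
move=> pp op; apply: cancel1X; rewrite -Yp_id ?prime_gt0 //.
by have := @frob1X p N 1 pp op; rewrite mul1n expr1.
Qed.

Lemma extract (U G : {poly int}) d n : (0 < d)%N -> (size U <= d)%N ->
  (U * (G \Po 'X^d))`_n = U`_(n %% d) * G`_(n %/ d).
Proof.
move=> d0 hU; rewrite coefM.
have hj0 : (n %% d < n.+1)%N by rewrite ltnS leq_mod.
rewrite (bigD1 (Ordinal hj0)) //= big1 ?addr0.
  rewrite coef_comp_poly_Xn //.
  have hdv : (n - n %% d = n %/ d * d)%N by rewrite {1}(divn_eq n d) addnK.
  by rewrite hdv dvdn_mull // mulnK.
move=> j hj; rewrite coef_comp_poly_Xn //.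
case: (ltnP j d) => hjd; last by rewrite nth_default ?mul0r // (leq_trans hU).
case: ifP => hdv; last by rewrite mulr0.
exfalso; move/eqP: hj; apply; apply: val_inj => /=.
have hjn : (j <= n)%N by rewrite -ltnS.
have : ((n - j + j) %% d = j %% d)%N by rewrite -modnDml (eqP hdv) add0n.
by rewrite subnK // (modn_small hjd) => ->.
Qed.


Lemma emMn' q N f n : em q N f -> em q N (f *+ n).
Proof. by move=> h i hi; rewrite coefMn -mulr_natr; apply: dvdz_mulr; apply: h. Qed.

Definition Uu (p u s' : nat) : {poly int} :=
  Qp p s'.+1 + (Yp p \Po 'X^(p ^ s')) * Qp p s' *+ u.

Lemma Qp_S p K : Qp p K.+1 = Qp p K * (1 - 'X^(p ^ K)) ^+ (p - 1).
Proof. by rewrite /Qp big_ord_recr. Qed.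

Lemma comp_1Xn a b : (1 - 'X^a) \Po 'X^b = 1 - 'X^(b * a) :> {poly int}.
Proof. by rewrite comp_polyB -polyC1 comp_polyC polyC1 comp_Xn_poly -exprM. Qed.

Lemma main_cong p u' s' N : prime p -> odd p ->
  em (p%:Z * p%:Z) N ((1 - 'X) ^+ (u'.+1 * p ^ s'.+1) * Qp p s'.+1
      - Uu p u'.+1 s' * (1 - 'X^(p ^ s'.+1)) ^+ u'.+1).
Proof.
move=> pp op.
have p0 : (0 < p)%N by apply: prime_gt0.
set w : {poly int} := 'X^(p ^ s').
set z : {poly int} := 'X^(p ^ s'.+1).
set Yw := Yp p \Po w.
set R' := Qp p s'.
set h := (1 - w) * Yw.
have hz : (1 - w) ^+ p = (1 - z) + h.
  have := congr1 (fun f => f \Po w) (Yp_id p0).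
  rewrite comp_polyB comp_polyM comp_exp !comp_1X comp_1Xn -expnSr => E.
  have E' : (1 - w) ^+ p - (1 - z) = h := E.
  by rewrite -E'; ring.
have hY : em p%:Z N Yw by apply: em_comp; [rewrite expn_gt0 p0|apply: Yp_em].
have hh : em p%:Z N h by apply: emMr.
rewrite /Uu Qp_S -/R' -/w.
apply: (em_trans (g := ((1 - w) ^+ p) ^+ u'.+1 * (R' * (1 - w) ^+ (p - 1)))).
  rewrite -mulrBl; apply: emMl; rewrite mulnC exprM; apply: emX; exact: pow_ps.
rewrite hz.
apply: (em_trans (g := ((1 - z) ^+ u'.+1 + h * (1 - z) ^+ u' *+ u'.+1) * (R' * (1 - w) ^+ (p - 1)))).
  rewrite -mulrBl; apply: emMl.
  have := binom2 (1 - z) u' hh.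
  have -> : forall a b c : {poly int}, a - b - c = a - (b + c) by move=> a b c; ring.
  done.
have e1 : (1 - w) * (1 - w) ^+ (p - 1) = (1 - z) + h by rewrite -exprS subn1 prednK.
have -> : ((1 - z) ^+ u'.+1 + h * (1 - z) ^+ u' *+ u'.+1) * (R' * (1 - w) ^+ (p - 1)) -
    (R' * (1 - w) ^+ (p - 1) + Yw * R' *+ u'.+1) * (1 - z) ^+ u'.+1
  = (Yw * R' * (1 - z) ^+ u' *+ u'.+1) * ((1 - w) * (1 - w) ^+ (p - 1) - (1 - z)).
  rewrite -(mulr_natr (h * (1 - z) ^+ u')) -(mulr_natr (Yw * R')) -(mulr_natr (Yw * R' * (1 - z) ^+ u')).
  rewrite !exprS /h.
  set B := (1 - z) ^+ u'; set C := (1 - w) ^+ (p - 1); set c := (u'.+1)%:R; ring.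
rewrite e1; have -> : 1 - z + h - (1 - z) = h by ring.
rewrite -(mulr_natr (Yw * R' * (1 - z) ^+ u')) -!mulrA.
apply: (em_dvd (a := p%:Z * p%:Z)); first by apply: dvdzz.
apply: emMM => //; apply: emMr; apply: emMr; apply: emMr; exact.
Qed.


Definition Ep (p u K : nat) : {poly int} := (1 - 'X) ^+ u * Qp p K.

Lemma main_T p u' s' n : prime p -> odd p -> (s'.+1 <= n.+1)%N ->
  em (p%:Z * p%:Z) n ((1 - 'X) ^+ (u'.+1 * p ^ s'.+1) * Qp p n.+1
      - Uu p u'.+1 s' * (Ep p u'.+1 (n.+1 - s'.+1) \Po 'X^(p ^ s'.+1))).
Proof.
move=> pp op hs.
have -> : Qp p n.+1 = Qp p (s'.+1 + (n.+1 - s'.+1)) by rewrite subnKC.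
rewrite Qp_split /Ep comp_polyM comp_exp comp_1X mulrA mulrA -mulrBl.
by apply: emMl; apply: main_cong.
Qed.

Lemma size_1Xd d : (size ((1 - 'X^d)%R : {poly int}) <= d.+1)%N.
Proof.
apply: (leq_trans (size_polyD _ _)); rewrite size_polyN size_polyXn size_poly1.
by rewrite geq_max leqnn.
Qed.

Lemma size_Qp p K : (0 < p)%N -> (size (Qp p K) <= p ^ K)%N.
Proof.
move=> p0; elim: K => [|K IH]; first by rewrite /Qp big_ord0 size_poly1.
rewrite Qp_S; apply: (leq_trans (size_polyMleq _ _)).
have h2 := size_poly_exp_leq (1 - 'X^(p ^ K) : {poly int}) (p - 1).
have h3 := size_1Xd (p ^ K).
have h4 : ((size ((1 - 'X^(p ^ K))%R : {poly int})).-1 * (p - 1) <= p ^ K * (p - 1))%N.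
  by apply: leq_mul => //; move: h3; lia.
rewrite expnS.
have : (p * p ^ K = p ^ K + p ^ K * (p - 1))%N.
  set P := (p ^ K)%N; nia.
move=> ->; move: h2 h4 IH; set c := (p ^ K * (p - 1))%N; set s1 := ((size _).-1 * (p - 1))%N; set P := (p ^ K)%N. set a := size (Qp p K); set b := size ((1 - 'X^P) ^+ (p - 1)). clearbody a b c s1 P; lia.
Qed.

Lemma sumX_poly P : \sum_(j < P) 'X^j = \poly_(j < P) (1 : int).
Proof. by rewrite poly_def; apply: eq_bigr => j _; rewrite scale1r. Qed.

Lemma size_Yp p : (0 < p)%N -> (size (Yp p) <= p)%N.
Proof.
move=> p0; rewrite /Yp; apply: (leq_trans (size_polyD _ _)); rewrite size_polyN geq_max.
rewrite sumX_poly size_poly andbT.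
apply: (leq_trans (size_poly_exp_leq _ _)).
have : (size ((1 - 'X)%R : {poly int}) <= 2)%N by have := size_1Xd 1; rewrite expr1.
move=> h; have h' : ((size ((1 - 'X)%R : {poly int})).-1 <= 1)%N.
  by move: h; set t := size _; clearbody t; lia.
have := leq_mul h' (leqnn (p - 1)); set t := (_ * (p - 1))%N; clearbody t; lia.
Qed.

Lemma size_Uu p u s' : (0 < p)%N -> (size (Uu p u s') <= p ^ s'.+1)%N.
Proof.
move=> p0; rewrite /Uu; apply: (leq_trans (size_polyD _ _)); rewrite geq_max size_Qp //=.
rewrite -scaler_nat; apply: (leq_trans (size_scale_leq _ _)).
apply: (leq_trans (size_polyMleq _ _)).
have h1 := size_comp_poly_leq (Yp p) ('X^(p ^ s')).
have h2 := size_Yp p0; have h3 := @size_Qp p s' p0.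
rewrite size_polyXn /= in h1.
have h4 : ((size (Yp p)).-1 * p ^ s' <= (p - 1) * p ^ s')%N.
  by apply: leq_mul => //; lia.
rewrite expnS.
have : (p * p ^ s' = (p - 1) * p ^ s' + p ^ s')%N.
  by rewrite mulnBl mul1n subnK // leq_pmull.
move=> ->; move: h1 h4 h3; set A := ((size (Yp p)).-1 * p ^ s')%N; set B := ((p - 1) * p ^ s')%N.
set C := (p ^ s')%N; set D := size (Yp p \Po _); set E := size (Qp p s'); clearbody A B C D E; lia.
Qed.

Lemma Uu_unit p u s' r : prime p -> odd p -> (r < p ^ s'.+1)%N ->
  ~~ (p%:Z %| (Uu p u s')`_r)%Z.
Proof.
move=> pp op hr.
have p0 := prime_gt0 pp.
have h : em p%:Z r (Uu p u s' - \sum_(j < p ^ s'.+1) 'X^j).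
  rewrite /Uu.
  have -> : forall a b c : {poly int}, a + b - c = (a - c) + b by move=> a b c; ring.
  apply: emD.
    apply: cancel1X; rewrite mulrBr geom_id; exact: Q_tele.
  apply: emMn'; apply: emMl; apply: em_comp; [by rewrite expn_gt0 p0 | exact: Yp_em].
have := h r (leqnn r); rewrite coefB sumX_poly coef_poly hr.
move=> h1; apply/negP => hd.
have := rpredB hd h1.
have -> : (Uu p u s')`_r - ((Uu p u s')`_r - 1) = 1 by ring.
rewrite dvdzE /= => h2. move: h2; rewrite dvdn1 => /eqP h2; move: (prime_gt1 pp); by rewrite h2.
Qed.


Definition cc (p a : nat) : int := ((1 - 'X) ^+ (p - 1) : {poly int})`_a.
Definition qq (p K m : nat) : int := (Qp p K)`_m.

Lemma Qp_S0 p K : Qp p K.+1 = (1 - 'X) ^+ (p - 1) * (Qp p K \Po 'X^p).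
Proof.
have := Qp_split p 1 K; rewrite add1n => ->.
by rewrite /Qp big_ord1 expn0 expr1 expn1.
Qed.

Lemma size_1Xp p : (0 < p)%N -> (size ((1 - 'X) ^+ (p - 1) : {poly int}) <= p)%N.
Proof.
move=> p0; apply: (leq_trans (size_poly_exp_leq _ _)).
have : (size ((1 - 'X)%R : {poly int}) <= 2)%N by have := size_1Xd 1; rewrite expr1.
move=> h; have h' : ((size ((1 - 'X)%R : {poly int})).-1 <= 1)%N.
  by move: h; set t := size _; clearbody t; lia.
have := leq_mul h' (leqnn (p - 1)); set t := (_ * (p - 1))%N; clearbody t; lia.
Qed.

Lemma qS p K a b : (0 < p)%N -> (a < p)%N -> qq p K.+1 (a + p * b) = cc p a * qq p K b.
Proof.
move=> p0 ha; rewrite /qq Qp_S0 extract ?size_1Xp //.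
have e : (a + p * b = b * p + a)%N by rewrite addnC mulnC.
by rewrite e modnMDl divnMDl // (modn_small ha) (divn_small ha) addn0.
Qed.

Lemma qS' p K m : (0 < p)%N -> qq p K.+1 m = cc p (m %% p) * qq p K (m %/ p).
Proof.
move=> p0; rewrite {1}(divn_eq m p) addnC mulnC; apply: qS => //; exact: ltn_pmod.
Qed.

Lemma cc0 p : cc p 0 = 1.
Proof.
rewrite /cc; elim: (p - 1)%N => [|n IH]; first by rewrite expr0 coef1.
by rewrite exprS coef0M IH mulr1 coefB coef1 coefX subr0.
Qed.

Lemma ccpm1 p : odd p -> cc p (p - 1) = 1.
Proof.
move=> op; rewrite /cc.
have hp : (0 < p)%N by case: p op.
have -> : (1 - 'X : {poly int}) = - ('X - 1%:P) by rewrite polyC1 opprB.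
rewrite exprNn.
have -> : (-1) ^+ (p - 1) = 1 :> {poly int}.
  by rewrite -signr_odd oddB // op /= expr0.
rewrite mul1r.
have := monic_exp (p - 1) (monicXsubC (1 : int)); move/monicP.
by rewrite lead_coefE size_exp_XsubC.
Qed.

Lemma cc_unit p a : prime p -> odd p -> (a < p)%N -> ~~ (p%:Z %| cc p a)%Z.
Proof.
move=> pp op ha; have := @Yp_em p a pp op a (leqnn a).
rewrite /Yp coefB sumX_poly coef_poly ha -/(cc p a) => h1.
apply/negP => hd.
have := rpredB hd h1.
have -> : cc p a - (cc p a - 1) = 1 by ring.
rewrite dvdzE /= dvdn1 => /eqP h2; move: (prime_gt1 pp); by rewrite h2.
Qed.

Lemma abs_mul_dvd (p : nat) (x y : int) : prime p ->
  ~~ (p%:Z %| x)%Z -> ~~ (p%:Z %| y)%Z -> ~~ (p%:Z %| x * y)%Z.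
Proof.
move=> pp; rewrite !dvdzE /= abszM Euclid_dvdM //.
by move=> /negbTE -> /negbTE ->.
Qed.

Lemma qq_unit p K m : prime p -> odd p -> (m < p ^ K)%N -> ~~ (p%:Z %| qq p K m)%Z.
Proof.
move=> pp op; have p0 := prime_gt0 pp.
elim: K m => [|K IH] m hm.
  rewrite expn0 ltnS leqn0 in hm; rewrite /qq /Qp big_ord0 coef1 (eqP hm) /=.
  by rewrite dvdzE /= dvdn1; apply/eqP => h2; move: (prime_gt1 pp); rewrite h2.
rewrite qS' //; apply: abs_mul_dvd => //; first by apply: cc_unit => //; apply: ltn_pmod.
apply: IH; rewrite ltn_divLR // -expnSr //.
Qed.


Lemma q_tau p K tau e Y : prime p -> odd p -> (0 < e < p)%N ->
  qq p (K + tau).+1 (p ^ tau * (e + p * Y)) = cc p e * qq p K Y /\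
  qq p (K + tau).+1 (p ^ tau * (e + p * Y) - 1) = cc p (e - 1) * qq p K Y.
Proof.
move=> pp op /andP [e0 ep]; have p0 := prime_gt0 pp.
elim: tau => [|tau [IH1 IH2]].
  rewrite addn0 expn0 mul1n; split; first by apply: qS.
  have -> : (e + p * Y - 1 = (e - 1) + p * Y)%N by lia.
  by apply: qS => //; lia.
rewrite addnS; split.
  have -> : (p ^ tau.+1 * (e + p * Y) = 0 + p * (p ^ tau * (e + p * Y)))%N.
    by rewrite add0n expnS mulnA.
  by rewrite qS // cc0 mul1r.
have hP : (0 < p ^ tau * (e + p * Y))%N by rewrite muln_gt0 expn_gt0 p0; lia.
have -> : (p ^ tau.+1 * (e + p * Y) - 1 = (p - 1) + p * (p ^ tau * (e + p * Y) - 1))%N.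
  rewrite expnS -mulnA; move: hP; set P := (p ^ tau * (e + p * Y))%N; clearbody P; nia.
by rewrite qS ?ccpm1 ?mul1r //; lia.
Qed.

Lemma sum_shrink (F : nat -> int) p n : (p <= n)%N -> (forall j, (p <= j)%N -> F j = 0) ->
  \sum_(j < n) F j = \sum_(j < p) F j.
Proof.
move=> hpn hF; rewrite -(subnKC hpn) big_split_ord /=.
rewrite [X in _ + X = _]big1 ?addr0 // => i _; apply: hF; by rewrite leq_addr.
Qed.

Definition beta1 p u d : int :=
  \sum_(j < p) ((1 - 'X) ^+ u : {poly int})`_j * (if (j <= d)%N then cc p (d - j) else 0).
Definition beta2 p u d : int :=
  \sum_(j < p) ((1 - 'X) ^+ u : {poly int})`_j * (if (d < j)%N then cc p (p + d - j) else 0).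

Lemma size_1Xu u : (size ((1 - 'X) ^+ u : {poly int}) <= u.+1)%N.
Proof.
apply: (leq_trans (size_poly_exp_leq _ _)).
have : (size ((1 - 'X)%R : {poly int}) <= 2)%N by have := size_1Xd 1; rewrite expr1.
move=> h; have h' : ((size ((1 - 'X)%R : {poly int})).-1 <= 1)%N.
  by move: h; set t := size _; clearbody t; lia.
have := leq_mul h' (leqnn u); set t := (_ * u)%N; clearbody t; lia.
Qed.

Lemma E_coef p u K1 d M1 : prime p -> (u < p)%N -> (d < p)%N -> (0 < M1)%N ->
  (Ep p u K1.+1)`_(d + p * M1) = qq p K1 M1 * beta1 p u d + qq p K1 (M1 - 1) * beta2 p u d.
Proof.
move=> pp hu hd hM; have p0 := prime_gt0 pp.
rewrite /Ep coefM.
set e := fun j => ((1 - 'X) ^+ u : {poly int})`_j.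
have he : forall j, (p <= j)%N -> e j = 0.
  by move=> j hj; rewrite /e nth_default // (leq_trans (size_1Xu u)) // (leq_trans hu).
have hpn : (p <= (d + p * M1).+1)%N.
  by apply: leqW; apply: (leq_trans _ (leq_addl _ _)); apply: leq_pmulr.
rewrite (@sum_shrink (fun j => e j * qq p K1.+1 (d + p * M1 - j)) p) //; last first.
  by move=> j hj; rewrite he // mul0r.
rewrite /beta1 /beta2 !mulr_sumr -big_split /=; apply: eq_bigr => j _.
have hj := ltn_ord j.
rewrite -/(e j) -/(qq p K1.+1 _).
case: (leqP j d) => hjd.
  have -> : (d + p * M1 - j = (d - j) + p * M1)%N by lia.
  by rewrite qS //; [ring | lia].
have -> : (d + p * M1 - j = (p + d - j) + p * (M1 - 1))%N.
  move: hM; set P := M1; nia.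
by rewrite qS //; [ring | lia].
Qed.


Lemma nu_class (p : nat) (a v b : int) : prime p -> (nu p a \in [:: 1; 2]%N) ->
  (p%:Z * p%:Z %| a - v * b)%Z -> ~~ (p%:Z %| v)%Z ->
  nu p a = (if (p%:Z * p%:Z %| b)%Z then 2 else 1)%N.
Proof.
move=> pp hnu hab hv.
have a0 : (0 < `|a|)%N.
  rewrite absz_gt0; apply/negP => /eqP a0; move: hnu; rewrite /nu a0 /= logn0.
  by [].
have hp2 : forall x : int, (p%:Z * p%:Z %| x)%Z = (p ^ 2 %| `|x|)%N.
  by move=> x; rewrite dvdzE abszM expnS expn1.
have cop : coprimez (p%:Z * p%:Z) v.
  rewrite coprimezE abszM coprimeMl andbb prime_coprime //.
case: ifP => hb.
  have ha : (p%:Z * p%:Z %| a)%Z.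
    have -> : a = (a - v * b) + v * b by ring.
    by rewrite rpredD // dvdz_mull.
  rewrite hp2 pfactor_dvdn // in ha.
  move: hnu; rewrite /nu !inE => /orP [/eqP h1|/eqP //].
  by move: ha; rewrite h1.
have ha : ~~ (p%:Z * p%:Z %| a)%Z.
  apply/negP => ha; move/negP: hb; apply.
  rewrite -(Gauss_dvdzl b cop) mulrC.
  have -> : v * b = a - (a - v * b) by ring.
  by rewrite rpredB.
rewrite hp2 pfactor_dvdn // in ha.
move: hnu; rewrite /nu !inE => /orP [/eqP //|/eqP h2].
by move: ha; rewrite h2.
Qed.

Lemma M1_form p n s t : (1 < p)%N -> (s < t)%N ->
  (forall j, (s < j < t)%N -> digit p j n = 0%N) ->
  (n %/ p ^ s.+1 = p ^ (t - s.+1) * (n %/ p ^ t))%N.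
Proof.
move=> p1 hst hd.
suff H : forall i, (s.+1 + i <= t)%N -> (n %/ p ^ s.+1 = p ^ i * (n %/ p ^ (s.+1 + i)))%N.
  by move: (H (t - s.+1)%N); rewrite (subnKC hst) => H'; apply: H'.
elim=> [|i IH] hi; first by rewrite expn0 mul1n addn0.
rewrite IH; last by apply: ltnW; rewrite addnS in hi.
have hz := hd (s.+1 + i)%N; rewrite /digit in hz.
rewrite {1}(divn_eq (n %/ p ^ (s.+1 + i)) p) hz; last first.
  by apply/andP; split; [rewrite ltnS leq_addr | rewrite addnS in hi].
rewrite addn0 -divnMA -expnSr -addnS expnS; set X := (n %/ _)%N; set P := (p ^ i)%N; clearbody X P; nia.
Qed.

Definition beta p u d e : int := cc p e * beta1 p u d + cc p (e - 1) * beta2 p u d.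

Lemma A_mod p u' s' n t : prime p -> odd p -> (u'.+1 < p)%N ->
  (p ^ s'.+2 <= n)%N -> is_tn p s'.+1 n t ->
  exists v : int, ~~ (p%:Z %| v)%Z /\
   (p%:Z * p%:Z %| A p ((p - 1) * (u'.+1 * p ^ s'.+1 - 1)) n
        - v * beta p u'.+1 (digit p s'.+1 n) (digit p t n))%Z.
Proof.
move=> pp op hu hn [hst ht hz].
have p0 := prime_gt0 pp; have p1 := prime_gt1 pp.
set s := s'.+1; set u := u'.+1.
have hsn : (s'.+1 <= n.+1)%N.
  apply: leqW; apply: (leq_trans _ hn); apply: (leq_trans (ltnW (ltn_expl s'.+1 p1))).
  by rewrite leq_exp2l // ltnW.
have h1 := @A_T p u s n pp op (ltn0Sn _) (ltn0Sn _).
have h2 := @main_T p u' s' n pp op hsn.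
have h3 := (em_trans h1 h2) n (leqnn n).
rewrite coefB extract ?size_Uu ?expn_gt0 ?p0 // in h3.
set r := (n %% p ^ s)%N in h3; set M := (n %/ p ^ s)%N in h3.
have hM : M = (digit p s n + p * (n %/ p ^ s.+1))%N.
  by rewrite /digit -/M {1}(divn_eq M p) addnC mulnC /M -divnMA -expnSr.
have hK : (n.+1 - s'.+1 = (n - s).+1)%N.
  have : (s < n)%N.
    apply: (leq_trans _ hn); apply: (leq_trans (ltn_expl s p1)).
    by rewrite leq_exp2l.
  rewrite /s; lia.
have hM1 : (0 < n %/ p ^ s.+1)%N by rewrite divn_gt0 ?expn_gt0 ?p0.
have hd' : (digit p s n < p)%N by rewrite /digit ltn_mod.
rewrite hK hM (@E_coef p u (n - s) (digit p s n) (n %/ p ^ s.+1) pp hu hd' hM1) in h3.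
have htn : (t < n)%N.
  have : (0 < n %/ p ^ t)%N.
    rewrite lt0n; apply/negP => /eqP h0; move: ht; by rewrite /digit h0 mod0n.
  rewrite divn_gt0 ?expn_gt0 ?p0 // => h; apply: (leq_trans (ltn_expl t p1) h).
have hform := @M1_form p n s t p1 hst hz.
have hY : (n %/ p ^ t = digit p t n + p * (n %/ p ^ t.+1))%N.
  by rewrite /digit {1}(divn_eq (n %/ p ^ t) p) addnC mulnC -divnMA -expnSr.
have he : (0 < digit p t n < p)%N by rewrite lt0n ht /digit ltn_mod.
have hK2 : (n - s = ((n - t) + (t - s.+1)).+1)%N by rewrite /s; clear -hst htn; lia.
rewrite hform hY hK2 in h3.
have [q1 q2] := @q_tau p (n - t) (t - s.+1) (digit p t n) (n %/ p ^ t.+1) pp op he.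
rewrite q1 q2 in h3.
exists ((Uu p u s')`_r * qq p (n - t) (n %/ p ^ t.+1)); split.
  apply: abs_mul_dvd => //; first by apply: Uu_unit => //; rewrite /r ltn_mod expn_gt0 p0.
  apply: qq_unit => //; rewrite ltn_divLR ?expn_gt0 ?p0 // -expnD.
  have -> : (n - t + t.+1 = n.+1)%N by clear -htn; lia.
  by apply: (ltn_trans (ltn_expl n p1)); rewrite ltn_exp2l.
have E : forall (x c a1 a2 b1 b2 : int),
  x * (a1 * c * b1 + a2 * c * b2) = x * c * (a1 * b1 + a2 * b2) by move=> *; ring.
by move: h3; rewrite E.
Qed.

End Aux.
Import Aux.


Theorem theorem3p1 (p u s : nat) :
  prime p -> (3 <= p)%N -> (1 <= u <= p - 1)%N -> (2 <= s)%N ->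
  forall n n' t t' : nat,
    (p ^ s.+1 <= n)%N -> (p ^ s.+1 <= n')%N ->
    is_tn p s n t -> is_tn p s n' t' ->
    let k := ((p - 1) * (u * p ^ s - 1))%N in
    nu p (A p k n) \in [:: 1; 2]%N ->
    nu p (A p k n') \in [:: 1; 2]%N ->
    digit p s n = digit p s n' ->
    digit p t n = digit p t' n' ->
    nu p (A p k n) = nu p (A p k n').
Proof.
move=> pp p3 /andP [u1 up] s2 n n' t t' hn hn' htn htn' k hnu hnu' hds hdt; subst k.
have op : odd p.
  by case: (even_prime pp) => // h2; move: p3; rewrite h2.
case: s s2 hn hn' htn htn' hnu hnu' hds hdt => [//|s'] _ hn hn' htn htn' hnu hnu' hds hdt.
case: u u1 up hnu hnu' => [//|u'] _ up hnu hnu'.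
have hu : (u'.+1 < p)%N.
  by move: up; case: p pp {p3 hn hn' htn htn' hds hdt op hnu hnu'} => [//|p'] _; rewrite subn1.
have [v [hv hA]] := A_mod pp op hu hn htn.
have [v' [hv' hA']] := A_mod pp op hu hn' htn'.
rewrite (nu_class pp hnu hA hv) (nu_class pp hnu' hA' hv') hds hdt //.
Qed.
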